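(* Let $X(t)$, $t\in T$, be a separable centered Gaussian random function with $\rho(s,t)=(\mathbb{E}(X(t)-X(s))^2)^{1/2}$, $(T,\rho)$ relatively compact, and covering numbers $N(\varepsilon)$. Let $\Psi$ be a function with $N(\varepsilon)\le\Psi(\varepsilon)$ for all $\varepsilon>0$, and assume there are $\varepsilon_0>0$ and $C_2>1$ with $\Psi(\varepsilon/2)\le C_2\Psi(\varepsilon)$ for all $0<\varepsilon\le\varepsilon_0$. Then for every $\varepsilon\in(0,\varepsilon_0)$ and every $r\in(\tfrac12,1)$, $$\prod_{k=0}^\infty\mathbb{P}(2^{-k}\varepsilon|\xi|\le r^k\varepsilon)^{N(2^{-k-1}\varepsilon)}\ge\exp\{-C_3(r)\Psi(\varepsilon)\},$$ where $\xi$ is standard normal and $C_3(r)$ depends only on $C_2$ and $r$.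
   Context: $N(\varepsilon)$ is the minimal number of points $t_1,\dots,t_n\in T$ such that every $t\in T$ has $\rho(t,t_i)\le\varepsilon$ for some $i$. *)

(* Defs.v *)
From HB Require Import structures.
From mathcomp Require Import all_boot all_order all_algebra.
From mathcomp Require Import all_classical all_reals all_analysis.
Set Implicit Arguments. Unset Strict Implicit. Unset Printing Implicit Defensive.
Import Order.TTheory GRing.Theory Num.Theory.
Import numFieldNormedType.Exports.
Local Open Scope classical_set_scope.
Local Open Scope ring_scope.

Section defs.
Context {R : realType} {d : measure_display} {Omega : measurableType d}
  (P : probability Omega R) {T : Type}.

Definition centered_gaussian_rv (Y : Omega -> R) : Prop :=
  measurable_fun setT Y /\
  ((exists s : R, 0 < s /\
      forall A : set R, measurable A -> P (Y @^-1` A) = normal_prob 0 s A)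
   \/ P [set w | Y w <> 0] = 0%E).

Definition centered_gaussian_process (X : T -> Omega -> R) : Prop :=
  forall (n : nat) (ts : 'I_n -> T) (a : 'I_n -> R),
    centered_gaussian_rv (fun w => \sum_(i < n) a i * X (ts i) w).

Definition gauss_rho (X : T -> Omega -> R) (s t : T) : R :=
  Num.sqrt (fine (\int[P]_w ((X t w - X s w) ^+ 2)%:E)%E).

(* separability (Doob), with respect to the rho-topology on T: there is a
   countable D and a null set outside of which every X(t) is a limit of
   X(u_n) along some sequence u_n in D with u_n -> t. *)
Definition separable_process (X : T -> Omega -> R) : Prop :=
  exists (D : set T) (N : set Omega),
    countable D /\ measurable N /\ P N = 0%E /\
    forall w, ~ N w -> forall t : T, exists u : nat -> T,
      (forall n, D (u n)) /\
      (fun n => gauss_rho X (u n) t) @ \oo --> (0 : R) /\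
      (fun n => X (u n) w) @ \oo --> X t w.
End defs.

Section cover.
Context {R : realType} {T : Type}.

Definition is_eps_net (rho : T -> T -> R) (e : R) (n : nat) : Prop :=
  exists t : 'I_n -> T, forall s : T, exists i : 'I_n, rho s (t i) <= e.

(* (T, rho) relatively compact = totally bounded *)
Definition totally_bounded_pm (rho : T -> T -> R) : Prop :=
  forall e : R, 0 < e -> exists n : nat, is_eps_net rho e n.

(* N(e): minimal number of points of an e-net (0 if no finite net exists) *)
Definition covering_number (rho : T -> T -> R) (e : R) : nat :=
  match pselect (exists n : nat, `[< is_eps_net rho e n >]) with
  | left h => ex_minn h
  | right _ => 0%N
  end.
End cover.

(* Main.v *)
Require Import Defs.
From HB Require Import structures.
From mathcomp Require Import all_boot all_order all_algebra.
From mathcomp Require Import all_classical all_reals all_analysis.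
From mathcomp Require Import ring lra.
Import Order.TTheory GRing.Theory Num.Theory.
Import numFieldNormedType.Exports.
Local Open Scope classical_set_scope.
Local Open Scope ring_scope.

Section S.
Context {R : realType}.
Implicit Types (x y : R).

Definition cc : R := normal_peak (1:R) / normal_peak (Num.sqrt 2).

Lemma pdf_tail (t x : R) : 0 < t -> t < `|x| ->
  normal_pdf 0 1 x <= cc * expR (- (t ^+ 2 / 4)) * normal_pdf 0 (Num.sqrt 2) x.
Proof.
move=> t0 tx.
have s0 : Num.sqrt (2:R) != 0 by rewrite gt_eqF // sqrtr_gt0.
rewrite /normal_pdf (negbTE s0) oner_eq0 /= /cc /normal_fun !subr0 sqr_sqrtr //.
have p0 : 0 < normal_peak (Num.sqrt (2:R)) by exact: normal_peak_gt0.
rewrite [X in _ <= X](_ : _ = normal_peak 1 * (expR (- (t^+2/4)) * expR (- x ^+ 2 / (2 *+ 2)))); last first.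
  by field; rewrite gt_eqF.
rewrite ler_pM2l ?normal_peak_gt0 ?oner_eq0 // -expRD ler_expR.
have e : `|x| ^+ 2 = x ^+ 2 by rewrite real_normK ?num_real.
have h : t ^+ 2 <= `|x| ^+ 2.
  have := ltW tx; have := normr_ge0 x; nra.
rewrite e in h; rewrite expr1n. lra.
Qed.

Lemma tail (t : R) : 0 < t ->
  fine (normal_prob 0 1 (~` `[-t, t]%classic)) <= cc * expR (- (t ^+ 2 / 4)).
Proof.
move=> t0.
set B := (~` `[-t, t]%classic : set R).
have mB : measurable B by apply: measurableC.
have K0 : 0 <= cc * expR (- (t ^+ 2 / 4)).
  by rewrite mulr_ge0 ?expR_ge0 // /cc divr_ge0 // normal_peak_ge0.
have H : (normal_prob 0 1 B <= \int[lebesgue_measure]_(x in B)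
          ((cc * expR (- (t ^+ 2 / 4)) * normal_pdf 0 (Num.sqrt 2) x)%:E))%E.
  rewrite /normal_prob; apply: ge0_le_integral.
  - exact: mB.
  - by move=> x _; rewrite lee_fin normal_pdf_ge0.
  - by apply/measurable_realfun.measurable_EFinP; apply: measurable_funTS; exact: measurable_normal_pdf.
  - apply/measurable_realfun.measurable_EFinP; apply: measurable_funTS; apply: measurable_realfun.measurable_funM => //.
    exact: measurable_normal_pdf.
  - move=> x Bx; rewrite lee_fin; apply: pdf_tail => //.
    rewrite ltNge ler_norml; apply/negP => h; apply: Bx.
    by rewrite /= in_itv /=.
move: H; under eq_integral do rewrite EFinM; move=> H.
rewrite ge0_integralZl_EFin // in H; last first.
  by apply/measurable_realfun.measurable_EFinP; apply: measurable_funTS; exact: measurable_normal_pdf.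
  by move=> x _; rewrite lee_fin normal_pdf_ge0.
have H2 : (normal_prob 0 1 B <= (cc * expR (- (t ^+ 2 / 4)))%:E)%E.
  apply: (le_trans H); rewrite -[X in (_ <= X)%E]mule1.
  apply: lee_pmul => //.
    by apply: integral_ge0 => x _; rewrite lee_fin normal_pdf_ge0.
  exact: (@probability_le1 _ _ _ (normal_prob 0 (Num.sqrt (2:R))) B mB).
have f1 : normal_prob 0 1 B \is a fin_num by apply: fin_num_measure.
by rewrite -lee_fin fineK.
Qed.

Lemma c0_pos : 0 < fine (normal_prob (0:R) 1 `[-1, 1]%classic).
Proof.
pose I := (`[-1, 1]%classic : set R).
have mI : measurable I by exact: measurable_itv.
have H : ((normal_peak (1:R) * expR (- (1/2)))%:E * lebesgue_measure I
          <= normal_prob 0 1 I)%E.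
  rewrite -integral_cst // /normal_prob; apply: ge0_le_integral.
  - exact: mI.
  - by move=> x _; rewrite /= lee_fin mulr_ge0 ?expR_ge0 ?normal_peak_ge0.
  - by apply: measurable_cst.
  - by apply/measurable_realfun.measurable_EFinP; apply: measurable_funTS; exact: measurable_normal_pdf.
  - move=> x; rewrite /I /= in_itv /= => /andP [x1 x2]; rewrite lee_fin.
    rewrite /normal_pdf oner_eq0 /= /normal_fun subr0 expr1n.
    rewrite ler_pM2l ?normal_peak_gt0 ?oner_eq0 // ler_expR.
    have : x ^+ 2 <= 1 by nra.
    lra.
have f1 : normal_prob (0:R) 1 I \is a fin_num by apply: fin_num_measure.
rewrite -/I -lte_fin fineK //; apply: lt_le_trans H.
rewrite lebesgue_measure_itv /= lte_fin ifT; last by lra.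
rewrite -EFinD -EFinM lte_fin mulr_gt0 ?expR_gt0 ?normal_peak_gt0 ?oner_eq0 //.
by rewrite mulr_gt0 ?expR_gt0 // normal_peak_gt0 // oner_eq0.
Qed.

Lemma exp_poly (y : R) (m : nat) : 0 < y -> expR (- y) <= (m.+1)`!%:R / y ^+ m.+1.
Proof.
move=> y0.
have h := expR_ge1Dxn m (ltW y0).
have h2 : y ^+ m.+1 / (m.+1)`!%:R <= expR y by lra.
have F0 : 0 < (m.+1)`!%:R :> R by rewrite ltr0n fact_gt0.
have Y0 : 0 < y ^+ m.+1 by rewrite exprn_gt0.
rewrite expRN -[_ / y ^+ m.+1]invf_div lef_pV2 ?posrE ?expR_gt0 ?divr_gt0 //.
Qed.

Lemma bernoulli (b : R) (n : nat) : 1 < b -> 1 + n%:R * (b - 1) <= b ^+ n.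
Proof.
move=> b1; elim: n => [|n IH]; first by rewrite mul0r addr0 expr0.
rewrite exprS -addn1 natrD.
have n0 : 0 <= n%:R :> R by rewrite ler0n.
have h : b * (1 + n%:R * (b - 1)) <= b * b ^+ n by rewrite ler_pM2l //; lra.
have h2 : 0 <= n%:R * ((b - 1) * (b - 1)) by rewrite mulr_ge0 // mulr_ge0 //; lra.
nra.
Qed.

Lemma exists_m (b C : R) : 1 < b -> exists m : nat, C <= b ^+ m.+1.
Proof.
move=> b1.
have h0 : 0 <= `|C| / (b - 1) by rewrite divr_ge0 // subr_ge0 ltW.
have := archi_boundP h0.
set n := Num.Def.archi_bound _ => hn.
exists n.
have hb : 0 < b - 1 by rewrite subr_gt0.
rewrite ltr_pdivrMr // in hn.
have := @bernoulli b n b1.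
have := ler_norm C.
have hbn : 0 <= b ^+ n by rewrite exprn_ge0 // ltW // (lt_trans ltr01).
rewrite exprS.
nra.
Qed.

Lemma geo (n : nat) : \sum_(k < n) (2^-1 : R) ^+ k <= 2 - 2 * 2^-1 ^+ n.
Proof.
elim: n => [|n IH]; first by rewrite big_ord0 expr0; lra.
rewrite big_ord_recr /= exprS.
have : 0 <= (2^-1 : R) ^+ n by rewrite exprn_ge0.
lra.
Qed.

Lemma setA (eps r : R) (k : nat) : 0 < eps ->
  [set x : R | 2 ^- k * eps * `|x| <= r ^+ k * eps] = `[-((2*r)^+k), (2*r)^+k]%classic.
Proof.
move=> e0.
have E x : (2 ^- k * eps * `|x| <= r ^+ k * eps) = (`|x| <= (2*r)^+k).
  rewrite mulrAC ler_pM2r // mulrC ler_pdivrMr ?exprn_gt0 // exprMn mulrC.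
  done.
by apply/seteqP; split => x /=; rewrite in_itv /= -ler_norml E.
Qed.

Definition pk (a : R) (k : nat) := fine (normal_prob (0:R) 1 `[-(a^+k), a^+k]%classic).

Lemma pk_props (a : R) (k : nat) : 1 <= a ->
  [/\ fine (normal_prob (0:R) 1 `[-1, 1]%classic) <= pk a k, pk a k <= 1 &
      1 - pk a k <= cc * expR (- ((a ^+ k) ^+ 2 / 4))].
Proof.
move=> a1.
have ak : 1 <= a ^+ k by rewrite exprn_ege1.
pose I := (`[-(a^+k), a^+k]%classic : set R).
pose J := (`[-1, 1]%classic : set R).
have mI : measurable I by exact: measurable_itv.
have mJ : measurable J by exact: measurable_itv.
have fI : normal_prob (0:R) 1 I \is a fin_num by apply: fin_num_measure.
have fJ : normal_prob (0:R) 1 J \is a fin_num by apply: fin_num_measure.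
split.
- rewrite /pk -/I -/J; apply: fine_le => //.
  apply: le_measure; rewrite ?inE //.
  move=> x; rewrite /I /J /= !in_itv /= => /andP [h1 h2].
  apply/andP; split; lra.
- rewrite /pk -/I; rewrite -lee_fin fineK //.
  exact: probability_le1.
- have := @tail (a ^+ k) (lt_le_trans ltr01 ak).
  rewrite probability_setC // fineB //= /pk -/I.
Qed.

Definition Em (m : nat) : R := cc * (m.+1)`!%:R * 4 ^+ m.+1.

Lemma cc_ge0 : 0 <= cc.
Proof. by rewrite /cc divr_ge0 // normal_peak_ge0. Qed.

Lemma Em_ge0 m : 0 <= Em m.
Proof. rewrite /Em; apply: mulr_ge0; [apply: mulr_ge0; [exact: cc_ge0|by rewrite ler0n]|by rewrite exprn_ge0]. Qed.

Lemma term_bound (a C2 : R) (m k : nat) : 1 < a -> 0 <= C2 ->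
  2 * C2 <= (a ^+ 2) ^+ m.+1 ->
  C2 ^+ k.+1 * (1 - pk a k) <= C2 * Em m * 2^-1 ^+ k.
Proof.
move=> a1 C0 hB.
have [_ _ ht] := @pk_props a k (ltW a1).
set B := (a ^+ 2) ^+ m.+1 in hB *.
have a0 : 0 < a by apply: lt_trans a1.
have B0 : 0 < B by rewrite exprn_gt0 // exprn_gt0.
have Bk0 : 0 < B ^+ k by rewrite exprn_gt0.
set y := (a ^+ k) ^+ 2 / 4 in ht.
have y0 : 0 < y by rewrite divr_gt0 // exprn_gt0 // exprn_gt0.
have hy : y ^+ m.+1 = B ^+ k / 4 ^+ m.+1.
  by rewrite /y expr_div_n /B -!exprM (mulnC k) -mulnA (mulnC k).
have he := @exp_poly y m y0.
have cc0 : 0 <= cc by rewrite /cc divr_ge0 // normal_peak_ge0.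
have h1 : 1 - pk a k <= Em m / B ^+ k.
  apply: (le_trans ht).
  rewrite /Em -mulrA -mulrA ler_wpM2l //.
  apply: (le_trans he); rewrite hy invf_div mulrA.
  done.
have h2 : (C2 / B) ^+ k <= 2^-1 ^+ k.
  apply: lerXn2r.
  - by rewrite nnegrE divr_ge0 // ltW.
  - by rewrite nnegrE invr_ge0.
  - rewrite ler_pdivrMr //; lra.
apply: (le_trans (ler_wpM2l (exprn_ge0 _ C0) h1)).
rewrite [X in X <= _](_ : _ = C2 * Em m * (C2 / B) ^+ k); last first.
  by rewrite expr_div_n exprS; field; rewrite gt_eqF.
by rewrite ler_wpM2l // mulr_ge0 // Em_ge0.
Qed.

Lemma sum_bound (a C2 : R) (m n : nat) : 1 < a -> 0 <= C2 ->
  2 * C2 <= (a ^+ 2) ^+ m.+1 ->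
  \sum_(k < n) C2 ^+ k.+1 * (1 - pk a k) <= 2 * C2 * Em m.
Proof.
move=> a1 C0 hB.
apply: (@le_trans _ _ (\sum_(k < n) C2 * Em m * 2^-1 ^+ k)).
  by apply: ler_sum => k _; exact: term_bound.
rewrite -mulr_sumr.
have := geo n.
have : 0 <= (2^-1 : R) ^+ n by rewrite exprn_ge0.
have : 0 <= C2 * Em m by rewrite mulr_ge0 // Em_ge0.
nra.
Qed.

Lemma factor_bound (p c0 M : R) (N : nat) : 0 < c0 -> c0 <= p -> p <= 1 ->
  N%:R <= M -> expR (- (M * ((1 - p) / c0))) <= p ^+ N.
Proof.
move=> c00 c0p p1 NM.
have p0 : 0 < p by apply: lt_le_trans c0p.
set q := 1 - p.
have q0 : 0 <= q by rewrite /q subr_ge0.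
have e1 : p^-1 <= expR (q / p).
  have h := expR_ge1Dx (q / p).
  have hq : 1 + q / p = p^-1 by rewrite /q; field; rewrite gt_eqF.
  by rewrite hq in h.
have e2 : expR (- (q / p)) <= p.
  by rewrite expRN -[p in _ <= p]invrK lef_pV2 ?posrE ?invr_gt0 ?expR_gt0.
have e3 : q / p <= q / c0.
  by rewrite ler_wpM2l // lef_pV2 ?posrE.
have e4 : expR (- (q / c0)) <= p.
  by apply: le_trans e2; rewrite ler_expR lerN2.
have e5 : expR (- (q / c0)) ^+ N <= p ^+ N.
  apply: lerXn2r => //; by rewrite nnegrE ?expR_ge0 ?ltW.
apply: le_trans e5.
rewrite -expRM_natr ler_expR mulNr lerN2 [X in _ <= X]mulrC ler_wpM2l //.
by rewrite divr_ge0 // ltW.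
Qed.

Lemma psi_iter (Psi : R -> R) (C2 eps eps0 : R) : 0 <= C2 -> 0 < eps -> eps < eps0 ->
  (forall e : R, 0 < e -> e <= eps0 -> Psi (e / 2) <= C2 * Psi e) ->
  forall j : nat, Psi (eps / 2 ^+ j) <= C2 ^+ j * Psi eps.
Proof.
move=> C0 e0 ee0 H; elim => [|j IH]; first by rewrite expr0 divr1 mul1r.
have p2 : 0 < (2:R) ^+ j by rewrite exprn_gt0.
have ej : 0 < eps / 2 ^+ j by rewrite divr_gt0.
have ejle : eps / 2 ^+ j <= eps0.
  apply: (le_trans _ (ltW ee0)); rewrite ler_pdivrMr //.
  rewrite ler_peMr ?(ltW e0) // exprn_ege1 //; lra.
have -> : eps / 2 ^+ j.+1 = (eps / 2 ^+ j) / 2.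
  by rewrite exprS; field; rewrite gt_eqF.
apply: (le_trans (H _ ej ejle)).
by rewrite exprS -mulrA ler_wpM2l.
Qed.
End S.

Theorem lemma3 (R : realType) (C2 r : R) :
  1 < C2 -> 2^-1 < r -> r < 1 ->
  exists C3 : R,
  forall (d : measure_display) (Omega : measurableType d)
         (P : probability Omega R) (T : Type) (X : T -> Omega -> R)
         (Psi : R -> R) (eps0 : R),
    centered_gaussian_process P X ->
    separable_process P X ->
    totally_bounded_pm (gauss_rho P X) ->
    (forall e : R, 0 < e -> (covering_number (gauss_rho P X) e)%:R <= Psi e) ->
    0 < eps0 ->
    (forall e : R, 0 < e -> e <= eps0 -> Psi (e / 2) <= C2 * Psi e) ->
    forall eps : R, 0 < eps -> eps < eps0 ->
      expR (- (C3 * Psi eps)) <=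
      limn (fun n : nat => \prod_(k < n)
        fine (normal_prob 0 1
                [set x : R | 2 ^- k * eps * `|x| <= r ^+ k * eps])
          ^+ covering_number (gauss_rho P X) (eps / 2 ^+ k.+1)).
Proof.
move=> C21 r1 r2.
pose a := 2 * r.
have a1 : 1 < a by rewrite /a; lra.
have a21 : 1 < a ^+ 2 by rewrite expr2; nra.
have [m hm] := @exists_m R (a ^+ 2) (2 * C2) a21.
pose c0 := fine (normal_prob (0:R) 1 `[-1, 1]%classic).
have c00 : 0 < c0 := c0_pos.
have C0 : 0 <= C2 by lra.
exists (2 * C2 * Em m / c0).
move=> d Omega P T X Psi eps0 _ _ _ HN e00 Hpsi eps e0 eeps.
set N := fun k : nat => covering_number (gauss_rho P X) (eps / 2 ^+ k.+1).
have Psi0 : 0 <= Psi eps by apply: le_trans (HN _ e0); rewrite ler0n.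
have HNk : forall k : nat, (N k)%:R <= C2 ^+ k.+1 * Psi eps.
  move=> k; apply: le_trans (HN _ _) (@psi_iter R Psi C2 eps eps0 C0 e0 eeps Hpsi k.+1).
  by rewrite divr_gt0 // exprn_gt0.
have -> : (fun n : nat => \prod_(k < n)
        fine (normal_prob 0 1
                [set x : R | 2 ^- k * eps * `|x| <= r ^+ k * eps])
          ^+ covering_number (gauss_rho P X) (eps / 2 ^+ k.+1)) =
    (fun n : nat => \prod_(k < n) pk a k ^+ N k).
  by apply: funext => n; apply: eq_bigr => k _; rewrite setA.
set u := fun n : nat => _.
have pk_ge0 k : 0 <= pk a k.
  by have [h _ _] := @pk_props R a k (ltW a1); apply: le_trans h; apply: ltW.
have u0 n : 0 <= u n by rewrite /u prodr_ge0 // => k _; rewrite exprn_ge0.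
have lb n : expR (- (Psi eps / c0 * \sum_(k < n) C2 ^+ k.+1 * (1 - pk a k))) <= u n.
  elim: n => [|n IH]; first by rewrite /u big_ord0 big_ord0 mulr0 oppr0 expR0.
  rewrite /u big_ord_recr big_ord_recr /= mulrDr opprD expRD.
  apply: ler_pM; rewrite ?expR_ge0 //.
  have [h1 h2 _] := @pk_props R a n (ltW a1).
  have := @factor_bound R (pk a n) c0 (C2 ^+ n.+1 * Psi eps) (N n) c00 h1 h2 (HNk n).
  suff -> : Psi eps / c0 * (C2 ^+ n.+1 * (1 - pk a n)) =
            C2 ^+ n.+1 * Psi eps * ((1 - pk a n) / c0) by [].
  by ring.
have hu : {homo u : n m / (n <= m)%N >-> (m <= n)}.
  apply/nonincreasing_seqP => n.
  suff H : u n.+1 <= u n by exact: H.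
  rewrite /u big_ord_recr /= ler_piMr //.
  - apply: prodr_ge0 => k _; exact: exprn_ge0.
  - have [_ h2 _] := @pk_props R a n (ltW a1); exact: exprn_ile1.
have hl : has_lbound (range u) by exists 0 => _ [n _ <-].
have cu := cvgP _ (nonincreasing_cvgn hu hl).
apply: limr_ge => //; apply: nearW => n.
apply: le_trans (lb n).
rewrite ler_expR lerN2.
have hs := @sum_bound R a C2 m n a1 C0 hm.
rewrite (_ : 2 * C2 * Em m / c0 * Psi eps = Psi eps / c0 * (2 * C2 * Em m)); last by ring.
by rewrite ler_wpM2l // divr_ge0 // ltW.
Qed.
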